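(* Let $N=2^k$ for a positive integer $k$, let positive integers $N_s$ with $\sum_s N_s=N$ be given, and let $k_s=\lceil\lg N_s\rceil$. Consider any sAEDS with $|\mathcal X_s|=N_s$ such that, for each $s$, exactly $2^{k_s}-N_s$ states $x\in\mathcal X_s$ have $|\mathcal F^+_x|=2^{k-k_s+1}$ and the remaining $2N_s-2^{k_s}$ states have $|\mathcal F^+_x|=2^{k-k_s}$, each $\mathcal F^+_x$ being encoded by a fixed-length code of length $\lg|\mathcal F^+_x|$. Assume its state chain is irreducible, with stationary distribution $Q$. Then $$L\le H(p)+D(p\|q)+\sum_{s}p(s)\big(\nu_{N_s,\tilde Q_s}-\mu_{\mathrm{pi}}(N_s)\big)\le H(p)+D(p\|q)+\sum_s p(s)\nu_{N_s,\tilde Q_s},$$ where $0\le\mu_{\mathrm{pi}}(N_s)=k_s+1-2^{k_s}/N_s-\lg N_s\le\sigma$ with $\sigma=\lg\lg e+1-\lg e$, and $$0\le \nu_{N_s,\tilde Q_s}=\frac{2N_s-2^{k_s}}{N_s}-\sum_{x\in\check{\mathcal X}_s}\tilde Q_s(x)<\frac{2N_s-2^{k_s}}{N_s}\le1,$$ $\check{\mathcal X}_s$ being a set of $2N_s-2^{k_s}$ elements of $\mathcal X_s$ with the smallest values of $\tilde Q_s(x)$.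
   Context: Let $\mathcal S$ be a finite alphabet with $|\mathcal S|\ge 2$ and $p=\{p(s)\}$ a probability distribution with $p(s)>0$ for all $s$ (i.i.d. source). $\mathcal B=\{0,1\}^*$ (including the empty word), $l(\beta)$ the word length, $\lg=\log_2$. An AEDS with finite state set $\mathcal X$, $|\mathcal X|=N$, consists of maps $E_{\hat x}:\mathcal S\to\mathcal B$ and $F^-_{\hat x}:\mathcal S\to\mathcal X$ ($\hat x\in\mathcal X$) such that for every $x\in\mathcal X$ the words $E_{\hat x}(s)$ over all pairs $(\hat x,s)$ with $F^-_{\hat x}(s)=x$ are pairwise distinct and form a prefix-free set. The state chain is the Markov chain on $\mathcal X$ moving from $\hat x$ to $F^-_{\hat x}(s)$ with probability $p(s)$; for a stationary distribution $Q$ the average code length is $L=\sum_{\hat x}\sum_s p(s)Q(\hat x)l(E_{\hat x}(s))$. A state-divided AEDS (sAEDS) is an AEDS for which the sets $\mathcal X_s=\{F^-_{\hat x}(s):\hat x\in\mathcal X\}$ are pairwise disjoint with union $\mathcal X$; $N_s=|\mathcal X_s|$, $q(s)=N_s/N$. For $x\in\mathcal X_s$, $\mathcal F^+_x=\{\hat x: F^-_{\hat x}(s)=x\}$; for each $s$ these sets partition $\mathcal X$, and $\hat x\mapsto E_{\hat x}(s)$ is an injective prefix-free code on $\mathcal F^+_x$. For $x\in\mathcal X_s$, $\tilde Q_s(x)=\sum_{\hat x\in\mathcal F^+_x}Q(\hat x)$ (so $\tilde Q_s$ is a probability distribution on $\mathcal X_s$). $H(p)=-\sum_s p(s)\lg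 p(s)$, $D(p\|q)=\sum_s p(s)\lg(p(s)/q(s))$. *)

(* Defs.v *)
From HB Require Import structures.
From mathcomp Require Import all_boot all_order all_algebra.
From mathcomp Require Import all_classical all_reals all_analysis.
Set Implicit Arguments. Unset Strict Implicit. Unset Printing Implicit Defensive.
Import Order.TTheory GRing.Theory Num.Theory.
Local Open Scope ring_scope.

Definition lg {R : realType} (x : R) : R := ln x / ln 2.

Section AEDS.
Variables (R : realType) (S X : finType).

(* AEDS condition: for every state x, the words E_{xh}(s) over all pairs
   (xh, s) with F^-_{xh}(s) = x are pairwise distinct and prefix-free
   (no word is a prefix of the word of a different pair; this also
   excludes equal words for different pairs). *)
Definition is_AEDS (E : X -> S -> seq bool) (F : X -> S -> X) : Prop :=
  forall (a b : X) (s t : S), F a s = F b t -> (a, s) <> (b, t) ->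
    ~~ prefix (E a s) (E b t).

Definition Xs (F : X -> S -> X) (s : S) : {set X} := [set F xh s | xh : X].

Definition is_sAEDS (E : X -> S -> seq bool) (F : X -> S -> X) : Prop :=
  is_AEDS E F /\
  (forall s t, s != t -> [disjoint Xs F s & Xs F t]) /\
  \bigcup_(s : S) Xs F s = [set: X].

Definition Fplus (F : X -> S -> X) (s : S) (x : X) : {set X} :=
  [set xh | F xh s == x].

Definition trans (p : S -> R) (F : X -> S -> X) (xh y : X) : R :=
  \sum_(s | F xh s == y) p s.

Definition irreducible (p : S -> R) (F : X -> S -> X) : Prop :=
  forall x y : X, connect (fun a b => 0 < trans p F a b) x y.

Definition stationary (p : S -> R) (F : X -> S -> X) (Q : X -> R) : Prop :=
  (forall x, 0 <= Q x) /\ \sum_x Q x = 1 /\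
  (forall y, Q y = \sum_xh Q xh * trans p F xh y).

Definition avg_len (p : S -> R) (Q : X -> R) (E : X -> S -> seq bool) : R :=
  \sum_xh \sum_s p s * Q xh * (size (E xh s))%:R.

Definition entropy (p : S -> R) : R := - \sum_s p s * lg (p s).
Definition KLdiv (p q : S -> R) : R := \sum_s p s * lg (p s / q s).

Definition Qtilde (F : X -> S -> X) (Q : X -> R) (s : S) (x : X) : R :=
  \sum_(xh in Fplus F s x) Q xh.

Definition smallest_set (B : {set X}) (m : nat) (f : X -> R) (A : {set X}) : Prop :=
  A \subset B /\ #|A| = m /\
  (forall x y, x \in A -> y \in B :\: A -> f x <= f y).

Definition nu (n : nat) (A : {set X}) (Qt : X -> R) : R :=
  ((2 * n - 2 ^ up_log 2 n)%N)%:R / n%:R - \sum_(x in A) Qt x.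

End AEDS.

Definition kceil (n : nat) : nat := up_log 2 n.

Definition mu_pi {R : realType} (n : nat) : R :=
  (kceil n)%:R + 1 - (2 ^ kceil n)%N%:R / n%:R - lg (n%:R : R).

Definition sigma {R : realType} : R := lg (lg (expR (1 : R))) + 1 - lg (expR (1 : R)).

(* Main.v *)
Require Import Defs.
From HB Require Import structures.
From mathcomp Require Import all_boot all_order all_algebra.
From mathcomp Require Import all_classical all_reals all_analysis.
From mathcomp Require Import ring lra zify.
Import Order.TTheory GRing.Theory Num.Theory.
Local Open Scope ring_scope.
Lemma ln_lin (R : realType) (y : R) : 1 <= y <= 2 -> (y - 1) * ln 2 <= ln y.
Proof.
case/andP=> y1 y2.
have t0 : 0 <= 2 - y by rewrite subr_ge0.
have t1 : 2 - y <= 1 by lra.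
have h2 : (0:R) < 2 by lra.
have := @concave_ln R (Itv01 t0 t1) 1 2 ltr01 h2.
rewrite !convRE /= ln1 mulr0 add0r.
rewrite /unstable.onem.
have -> : (2 - y) * 1 + (1 - (2 - y)) * 2 = y by lra.
by have -> : 1 - (2 - y) = y - 1 by lra.
Qed.



Lemma kceil_bounds n : (0 < n)%N -> (n <= 2 ^ kceil n)%N /\ (2 ^ kceil n < 2 * n)%N.
Proof.
move=> n0; split; first exact: up_logP.
case: (ltnP 1 n) => n1.
  have := up_log_gtn (ltnSn 1) n1.
  have : (0 < kceil n)%N by rewrite /kceil up_log_gt0 n1.
  rewrite /kceil; case: (up_log 2 n) => // K _ /=.
  by rewrite expnS; lia.
have -> : n = 1%N by lia.
by rewrite /kceil up_log1.
Qed.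

Lemma mu_bounds (R : realType) n : (0 < n)%N ->
  0 <= mu_pi n :> R /\ mu_pi n <= sigma :> R.
Proof.
move=> n0; have [b1 b2] := @kceil_bounds n n0.
set K := kceil n in b1 b2 *.
have nR : (0 : R) < n%:R by rewrite ltr0n.
set y : R := (2 ^ K)%N%:R / n%:R.
have y1 : 1 <= y by rewrite /y ler_pdivlMr // mul1r ler_nat.
have y2 : y <= 2 by rewrite /y ler_pdivrMr // -natrM ler_nat; lia.
have y0 : 0 < y by lra.
have l2 : (0:R) < ln 2 by apply: ln_gt0; lra.
have e1 : ln (n%:R : R) = K%:R * ln 2 - ln y.
  have e2 : ln ((2 ^ K)%N%:R : R) = K%:R * ln 2.
    rewrite natrX lnXn ?ltr0n // mulr_natl.
    done.
  have : ((2 ^ K)%N%:R : R) = n%:R * y by rewrite /y mulrC divfK // gt_eqF.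
  move/(congr1 (@ln R)); rewrite lnM ?posrE // e2; lra.
have emu : mu_pi n = 1 - y + ln y / ln 2 :> R.
  rewrite /mu_pi -/K /lg e1 -/y mulrBl mulfK ?gt_eqF //; lra.
rewrite emu; split.
  have h := @ln_lin R y; move: h; rewrite y1 y2 => /(_ isT) h.
  have : y - 1 <= ln y / ln 2 by rewrite ler_pdivlMr.
  lra.
rewrite /sigma /lg expRK.
have -> : ln (1 / ln 2) = - ln (ln (2:R)) by rewrite div1r lnV ?posrE.
have h := @le_ln1Dx R (y * ln 2 - 1).
have : -1 < y * ln 2 - 1 by have := mulr_gt0 y0 l2; lra.
move/h; rewrite addrC subrK lnM ?posrE // => h2.
have : ln y <= y * ln 2 - 1 - ln (ln (2:R)) by lra.
move=> h3.
have : ln y * (ln 2)^-1 <= (y * ln 2 - 1 - ln (ln (2:R))) * (ln 2)^-1.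
  by rewrite ler_wpM2r // invr_ge0 ltW.
rewrite !mulrBl mulfK ?gt_eqF //.
rewrite mulNr; lra.
Qed.
Lemma dbl_sum (R : realType) (X : finType) (f : X -> R) (U V : {set X}) :
  (forall x y, x \in U -> y \in V -> f x <= f y) ->
  #|V|%:R * \sum_(x in U) f x <= #|U|%:R * \sum_(y in V) f y.
Proof.
move=> H.
have -> : #|V|%:R * \sum_(x in U) f x = \sum_(y in V) \sum_(x in U) f x.
  by rewrite sumr_const mulr_natl.
have -> : #|U|%:R * \sum_(y in V) f y = \sum_(y in V) \sum_(x in U) f y.
  by rewrite mulr_sumr; apply: eq_bigr => y _; rewrite sumr_const mulr_natl.
apply: ler_sum => y yV; apply: ler_sum => x xU; exact: H.
Qed.

Lemma smallest_le (R : realType) (X : finType) (f : X -> R) (A B D : {set X}) :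
  (forall x y, x \in A -> y \in B :\: A -> f x <= f y) ->
  D \subset B -> #|D| = #|A| ->
  \sum_(x in A) f x <= \sum_(x in D) f x.
Proof.
move=> H DB cD.
rewrite (big_setID D) [X in _ <= X](big_setID A) /= finset.setIC lerD2l.
have cU : #|A :\: D| = #|D :\: A|.
  have := cardsID D A; have := cardsID A D; rewrite finset.setIC; lia.
have H2 : forall x y, x \in A :\: D -> y \in D :\: A -> f x <= f y.
  move=> x y /finset.setDP [xA _] /finset.setDP [yD ynA]; apply: H => //.
  by rewrite inE ynA (fintype.subsetP DB).
have := @dbl_sum R X f _ _ H2; rewrite cU.
case: (posnP #|D :\: A|) => c0.
  rewrite c0 => _.
  rewrite (cards0_eq c0) big_set0.
  by move: cU; rewrite c0 => /cards0_eq ->; rewrite big_set0.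
by rewrite ler_pM2l // ltr0n.
Qed.

Lemma avg_le (R : realType) (X : finType) (f : X -> R) (A B : {set X}) :
  A \subset B ->
  (forall x y, x \in A -> y \in B :\: A -> f x <= f y) ->
  #|B|%:R * \sum_(x in A) f x <= #|A|%:R * \sum_(x in B) f x.
Proof.
move=> AB H.
have := @dbl_sum R X f _ _ H.
rewrite [\sum_(x in B) _](big_setID A) /= (finset.setIidPr AB).
have := cardsID A B; rewrite (finset.setIidPr AB) => <-.
rewrite natrD mulrDl mulrDr; lra.
Qed.
Lemma le_sum1 (R : realType) (I : finType) (P : pred I) (f : I -> R) i :
  P i -> (forall j, P j -> 0 <= f j) -> f i <= \sum_(j | P j) f j.
Proof.
move=> Pi H; rewrite (bigD1 i) //= lerDl; apply: sumr_ge0 => j /andP [Pj _].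
exact: H.
Qed.

Lemma part_sum (R : realType) (S X : finType) (F : X -> S -> X) s (g : X -> R) :
  \sum_(x in Xs F s) \sum_(xh in Fplus F s x) g xh = \sum_xh g xh.
Proof.
symmetry; rewrite (partition_big (fun xh => F xh s) (mem (Xs F s))) /=; last first.
  by move=> i _; rewrite /Xs; apply: imset_f.
apply: eq_bigr => x _; apply: eq_bigl => xh; by rewrite /Fplus inE.
Qed.

Lemma Q_pos (R : realType) (S X : finType) (p : S -> R) (F : X -> S -> X) Q :
  (forall s, 0 < p s) -> irreducible p F -> stationary p F Q -> forall x, 0 < Q x.
Proof.
move=> pp hirr [Qge [Qsum Qst]].
have trge : forall a b, 0 <= trans p F a b.
  by move=> a b; apply: sumr_ge0 => s _; exact: ltW.
have : ~~ [forall x, Q x <= 0].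
  apply/negP => /forallP H.
  have : \sum_x Q x <= 0 by apply: sumr_le0 => x _; exact: H.
  by rewrite Qsum; lra.
move/forallPn => [x0]; rewrite -ltNge => Qx0 y.
have := hirr x0 y; move/connectP => [pth hp ->].
elim: pth x0 Qx0 hp => //= b pth IH a Qa /andP [hab hp]; apply: IH hp.
rewrite Qst; apply: lt_le_trans (mulr_gt0 Qa hab) _.
apply: (@le_sum1 R X xpredT (fun xh => Q xh * trans p F xh b)) => // j _.
by apply: mulr_ge0.
Qed.

Lemma lg2n (R : realType) n : lg ((2 ^ n)%N%:R : R) = n%:R.
Proof.
have l2 : (0:R) < ln 2 by apply: ln_gt0; rewrite ltr1n.
have -> : ((2 ^ n)%N%:R : R) = (2:R) ^+ n by rewrite natrX.
rewrite /lg lnXn //.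
have e : ln (2:R) *+ n = n%:R * ln 2 by rewrite mulr_natl.
rewrite e mulfK // gt_eqF //.
Qed.

Theorem theorem6 (R : realType) (S X : finType) (p : S -> R) (k : nat)
  (Ns : S -> nat) (E : X -> S -> seq bool) (F : X -> S -> X) (Q : X -> R)
  (Xc : S -> {set X}) :
  (1 < #|S|)%N ->
  (forall s, 0 < p s) -> \sum_s p s = 1 ->
  (0 < k)%N -> #|X| = (2 ^ k)%N ->
  (forall s, 0 < Ns s)%N -> (\sum_s Ns s)%N = (2 ^ k)%N ->
  is_sAEDS E F ->
  (forall s, #|Xs F s| = Ns s) ->
  (forall s x, x \in Xs F s ->
     #|Fplus F s x| = (2 ^ (k - kceil (Ns s) + 1))%N \/
     #|Fplus F s x| = (2 ^ (k - kceil (Ns s)))%N) ->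
  (forall s, #|[set x in Xs F s | #|Fplus F s x| == (2 ^ (k - kceil (Ns s) + 1))%N]|
             = (2 ^ kceil (Ns s) - Ns s)%N) ->
  (forall xh s, (2 ^ size (E xh s))%N = #|Fplus F s (F xh s)|) ->
  irreducible p F -> stationary p F Q ->
  (forall s, smallest_set (Xs F s) (2 * Ns s - 2 ^ kceil (Ns s))%N
                          (Qtilde F Q s) (Xc s)) ->
  let q := fun s => (Ns s)%:R / (2 ^ k)%N%:R in
  let nus := fun s => nu (Ns s) (Xc s) (Qtilde F Q s) in
  [/\ avg_len p Q E <= entropy p + KLdiv p q + \sum_s p s * (nus s - mu_pi (Ns s)),
      entropy p + KLdiv p q + \sum_s p s * (nus s - mu_pi (Ns s))
        <= entropy p + KLdiv p q + \sum_s p s * nus s,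
      (forall s, 0 <= mu_pi (Ns s) :> R /\ mu_pi (Ns s) <= sigma :> R) &
      (forall s, 0 <= nus s /\
         nus s < ((2 * Ns s - 2 ^ kceil (Ns s))%N)%:R / (Ns s)%:R /\
         ((2 * Ns s - 2 ^ kceil (Ns s))%N)%:R / (Ns s)%:R <= 1 :> R)].
Proof.
move=> hS pp psum k0 cX Npos Nsum [hA [hdisj hcov]] cXs hF hcnt hE hirr hst hXc q nus.
have Qpos := @Q_pos R S X p F Q pp hirr hst.
case: hst => Qge [Qsum Qst].
have Qtge : forall s x, 0 <= Qtilde F Q s x.
  by move=> s x; apply: sumr_ge0 => xh _; exact: ltW.
have Qtsum : forall s, \sum_(x in Xs F s) Qtilde F Q s x = 1.
  by move=> s; rewrite /Qtilde (@part_sum R S X F s Q) Qsum.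
have ksk : forall s, (kceil (Ns s) <= k)%N.
  move=> s; rewrite /kceil; apply: up_log_min => //.
  rewrite -Nsum (bigD1 s) //=; exact: leq_addr.
have kb : forall s, (Ns s <= 2 ^ kceil (Ns s))%N /\ (2 ^ kceil (Ns s) < 2 * Ns s)%N.
  by move=> s; apply: kceil_bounds.
pose SX s := \sum_(x in Xc s) Qtilde F Q s x.
have T : forall s, \sum_xh Q xh * (size (E xh s))%:R
                   <= (k - kceil (Ns s))%N%:R + 1 - SX s.
  move=> s; set a := (k - kceil (Ns s))%N.
  pose Bg := [set x in Xs F s | #|Fplus F s x| == (2 ^ (a + 1))%N].
  have hsz : forall xh, size (E xh s) = (a + (F xh s \in Bg))%N.
    move=> xh; have hx : F xh s \in Xs F s by apply: imset_f.
    have := hE xh s; rewrite /Bg inE hx /=.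
    case: (hF s _ hx) => ->.
      by rewrite eqxx => /eqP; rewrite eqn_exp2l // => /eqP ->.
    have -> : (2 ^ a == 2 ^ (a+1))%N = false by rewrite eqn_exp2l //; lia.
    by move=> /eqP; rewrite eqn_exp2l // => /eqP ->; rewrite addn0.
  have BgX : Bg \subset Xs F s by apply/fintype.subsetP => x; rewrite inE => /andP [].
  have e1 : \sum_xh Q xh * (size (E xh s))%:R = a%:R + \sum_(x in Bg) Qtilde F Q s x.
    under eq_bigr => xh _ do rewrite hsz natrD mulrDr.
    rewrite big_split /= -mulr_suml Qsum mul1r; congr (_ + _).
    rewrite -(@part_sum R S X F s (fun xh => Q xh * (F xh s \in Bg)%:R)).
    have -> : \sum_(x in Bg) Qtilde F Q s x
          = \sum_(x in Xs F s) Qtilde F Q s x * (x \in Bg)%:R.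
      rewrite big_mkcond [RHS]big_mkcond /=; apply: eq_bigr => x _.
      rewrite /Bg inE; case: (x \in Xs F s) => /=; last by [].
      by case: (_ == _); rewrite ?mulr1 ?mulr0.
    apply: eq_bigr => x _; rewrite /Qtilde mulr_suml; apply: eq_bigr => xh.
    by rewrite /Fplus inE => /eqP ->.
  case: (hXc s) => XcX [cXc hmin].
  pose D := Xs F s :\: Bg.
  have cBg : #|Bg| = (2 ^ kceil (Ns s) - Ns s)%N by exact: hcnt s.
  have cD : #|D| = #|Xc s|.
    have := cardsID Bg (Xs F s); rewrite (finset.setIidPr BgX) cXs cBg cXc.
    rewrite /D; have := kb s; lia.
  have h1 := @smallest_le R X (Qtilde F Q s) (Xc s) (Xs F s) D hmin (finset.subsetDl _ _) cD.
  have h2 : 1 = \sum_(x in Bg) Qtilde F Q s x + \sum_(x in D) Qtilde F Q s x.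
    by rewrite -(Qtsum s) (big_setID Bg) /= (finset.setIidPr BgX).
  rewrite e1 /SX; lra.
have lgq : forall s, lg (q s) = lg (Ns s)%:R - k%:R.
  move=> s; rewrite /q /lg ln_div ?posrE ?ltr0n ?expn_gt0 // mulrBl.
  by congr (_ - _); exact: lg2n.
have qpos : forall s, 0 < q s.
  by move=> s; rewrite /q divr_gt0 // ltr0n ?expn_gt0.
have eHK : entropy p + KLdiv p q = \sum_s p s * (k%:R - lg (Ns s)%:R).
  rewrite /entropy /KLdiv -sumrN -big_split /=; apply: eq_bigr => s _.
  have -> : lg (p s / q s) = lg (p s) - lg (q s).
    by rewrite /lg ln_div ?posrE // mulrBl.
  rewrite lgq; ring.
have Cid : entropy p + KLdiv p q + \sum_s p s * (nus s - mu_pi (Ns s))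
         = \sum_s p s * ((k - kceil (Ns s))%N%:R + 1 - SX s).
  rewrite eHK -big_split /=; apply: eq_bigr => s _.
  have [b1 b2] := kb s.
  have N0 : (Ns s)%:R != 0 :> R by rewrite pnatr_eq0 -lt0n.
  rewrite /nus /nu /mu_pi -/(kceil _).
  rewrite natrB; last by lia.
  rewrite natrB; last exact: ksk.
  rewrite natrM mulrBl mulfK // -/(SX s).
  ring.
split.
- rewrite Cid /avg_len exchange_big /=; apply: ler_sum => s _.
  rewrite (eq_bigr (fun xh => p s * (Q xh * (size (E xh s))%:R))); last first.
    by move=> xh _; rewrite mulrA.
  rewrite -mulr_sumr; apply: ler_wpM2l; [exact: ltW | exact: T].
Show.
- rewrite lerD2l; apply: ler_sum => s _; apply: ler_wpM2l; first exact: ltW.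
  have := (@mu_bounds R (Ns s) (Npos s)).1; lra.
- by move=> s; apply: mu_bounds.
move=> s; case: (hXc s) => XcX [cXc hmin].
have [b1 b2] := kb s.
have NR : (0:R) < (Ns s)%:R by rewrite ltr0n.
have av := @avg_le R X (Qtilde F Q s) (Xc s) (Xs F s) XcX hmin.
rewrite cXs cXc Qtsum mulr1 -/(SX s) in av.
have SXpos : 0 < SX s.
  have : (0 < #|Xc s|)%N by rewrite cXc; lia.
  move/card_gt0P => [x xX].
  have xXs := fintype.subsetP XcX x xX.
  case/imsetP: xXs => xh _ ex.
  apply: (lt_le_trans (Qpos xh)).
  apply: (@le_trans _ _ (Qtilde F Q s x)).
    apply: (@le_sum1 R X (fun j => j \in Fplus F s x) Q xh).
      by rewrite /Fplus inE ex.
    by move=> j _; exact: ltW.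
  exact: (@le_sum1 R X (fun j => j \in Xc s) (Qtilde F Q s) x xX).
have -> : nus s = ((2 * Ns s - 2 ^ kceil (Ns s))%N)%:R / (Ns s)%:R - SX s by [].
split; last split.
- rewrite subr_ge0 ler_pdivlMr // mulrC //.
- lra.
- rewrite ler_pdivrMr // mul1r ler_nat; lia.
Qed.
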